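(* Let $l_0\ge4$ be even and $G\in\operatorname{1\text{-}d\text{-}Ring}_{l_0}$. Then along the cycle $\operatorname U(G)$ the vertices alternate between black and white.
   Context: For a finite vertex set $V$ and $N\ge1$, a route through $V$ of length $N$ is a sequence $\mathbf i=(i_1,\dots,i_N)\in V^N$ whose set of entries equals $V$; its circuit multigraph $G_{\mathbf i}$ has vertex set $V$ and edges $1,\dots,N$, edge $k<N$ from $i_k$ to $i_{k+1}$, edge $N$ from $i_N$ to $i_1$; $\mathcal C_{V,N}$ is the set of these. The black vertices are $B(G_{\mathbf i})=\{i_t:t\text{ odd}\}$, the others white. $\operatorname U(G)$ is the simple undirected graph on $V$ having an edge $\{v,w\}$ whenever $G$ has an edge from $v$ to $w$ or from $w$ to $v$ (an undirected connection). A directed multigraph is balanced if its edges split into pairs $(e,e')$ with the head of $e$ the tail of $e'$ and vice versa. For $l_0\ge3$, $G\in\mathcal C_{V,2l_0}$ with $\#V=l_0$ is of ring-type if $\operatorname U(G)$ is a cycle through all $l_0$ vertices and each undirected connection consists of exactly two edges of $G$; $\operatorname{1\text{-}d\text{-}Ring}_{l_0}$ is the set of ring-type graphs with $l_0$ vertices that are not balanced. *)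

(* Defs.v *)
From mathcomp Require Import all_boot.
Set Implicit Arguments. Unset Strict Implicit. Unset Printing Implicit Defensive.

(* A route of length N through the finite vertex set V is a map
   i : 'I_N -> V (0-indexed: i k is i_{k+1} of the paper) whose image is all of V. *)
Definition is_route (V : finType) (N : nat) (i : 'I_N -> V) : Prop :=
  forall v : V, exists k : 'I_N, i k = v.

(* Edge k of the circuit multigraph G_i goes from etail i k to ehead i k
   (the last edge goes from i_N back to i_1). *)
Definition etail (V : finType) (N : nat) (i : 'I_N -> V) (k : 'I_N) : V := i k.
Definition ehead (V : finType) (N : nat) (i : 'I_N -> V) (k : 'I_N) : V := i (ordS k).

(* Black vertices: {i_t : t odd} in 1-indexed notation, i.e. positions k even
   in our 0-indexed notation. *)
Definition black (V : finType) (N : nat) (i : 'I_N -> V) (v : V) : bool :=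
  [exists k : 'I_N, ~~ odd k && (i k == v)].

Definition conn_edges (V : finType) (N : nat) (i : 'I_N -> V) (v w : V)
  : {set 'I_N} :=
  [set k : 'I_N | ((etail i k == v) && (ehead i k == w))
                || ((etail i k == w) && (ehead i k == v))].

Definition adjU (V : finType) (N : nat) (i : 'I_N -> V) (v w : V) : bool :=
  (v != w) && (0 < #|conn_edges i v w|).

(* G_i is balanced: the edges split into pairs (e, e') of mutually reverse
   edges; encoded by a fixed-point-free involution on the edge set. *)
Definition balanced (V : finType) (N : nat) (i : 'I_N -> V) : Prop :=
  exists s : 'I_N -> 'I_N,
    forall k : 'I_N,
      [/\ s (s k) = k, s k != k,
          etail i (s k) = ehead i k & ehead i (s k) = etail i k].

Definition U_is_full_cycle (V : finType) (N l0 : nat) (i : 'I_N -> V) : Prop :=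
  exists c : 'I_l0 -> V,
    injective c /\
    forall v w : V,
      adjU i v w <->
      exists j : 'I_l0, (v = c j /\ w = c (ordS j)) \/ (w = c j /\ v = c (ordS j)).

Definition ring_type (V : finType) (l0 : nat) (i : 'I_(2 * l0) -> V) : Prop :=
  [/\ 3 <= l0, #|V| = l0, is_route i, U_is_full_cycle l0 i &
      forall v w : V, adjU i v w -> #|conn_edges i v w| = 2].

Definition one_d_ring (V : finType) (l0 : nat) (i : 'I_(2 * l0) -> V) : Prop :=
  ring_type i /\ ~ balanced i.

(* Main.v *)
Require Import Defs.
From mathcomp Require Import all_boot.
From mathcomp Require Import zify.

Lemma modS_small l0 j : j < l0 -> j.+1 %% l0 = if j.+1 == l0 then 0 else j.+1.
Proof. move=> h; case: eqP => [->|ne]; first by rewrite modnn. rewrite modn_small //; lia. Qed.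
Lemma ordSS_neq l0 (j : nat) : 3 <= l0 -> j < l0 -> (j.+1 %% l0).+1 %% l0 != j.
Proof. move=> h1 h2. rewrite (modS_small _ _ h2). case: ifP => /eqP e.
 rewrite modn_small //; lia.
 have h3 : j.+1 < l0 by lia. rewrite (modS_small _ _ h3); case: ifP => /eqP; lia. Qed.
Lemma ordS_neq l0 (j : nat) : 3 <= l0 -> j < l0 -> j.+1 %% l0 != j.
Proof. move=> h1 h2. rewrite (modS_small _ _ h2). case: ifP => /eqP e; lia. Qed.

Lemma walk_parity (V : finType) (l0 : nat) (i : 'I_(2*l0) -> V) (c : 'I_l0 -> V)
  (t : nat) (g : 'I_l0 -> 'I_l0) : 0 < l0 -> ~~ odd l0 -> odd t -> injective c ->
  (forall j, val (g j) = (j + t) %% l0) -> (forall k, exists j, i k = c j) ->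
  (forall k j, i k = c j -> i (ordS k) = c (g j)) ->
  forall k k', i k = i k' -> odd k = odd k'.
Proof.
move=> l0p ev tod cinj gv ex step.
have Np : 0 < 2 * l0 by lia.
pose z : 'I_(2*l0) := Ordinal Np.
have [j0 hj0] := ex z.
have claim : forall n (hn : n < 2 * l0), exists j, i (Ordinal hn) = c j /\ val j = (j0 + n * t) %% l0.
  elim=> [|n IH] hn.
    exists j0; split; last by rewrite mul0n addn0 modn_small.
    by rewrite -hj0; congr i; apply: val_inj.
  have hn' : n < 2 * l0 by lia.
  have [j [e1 e2]] := IH hn'.
  exists (g j); split.
    rewrite -(step _ _ e1); congr i; apply: val_inj => /=.
    by rewrite modn_small.
  by rewrite gv e2 modnDml mulSn; congr (_ %% _); rewrite addnCA addnA addnAC [j0 + t]addnC.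
have mod2 : forall m, (m %% l0) %% 2 = m %% 2.
  move=> m; apply: modn_dvdm; by rewrite dvdn2.
move=> [k hk] [k' hk'] e.
have [j [e1 e2]] := claim k hk.
have [j' [e1' e2']] := claim k' hk'.
have ejj : j = j' by apply: cinj; rewrite -e1 -e1'.
have : (j0 + k * t) %% 2 = (j0 + k' * t) %% 2.
  by rewrite -(mod2 (j0 + k * t)) -(mod2 (j0 + k' * t)) -e2 -e2' ejj.
rewrite !modn2 !oddD !oddM tod !andbT /=.
by case: (odd j0); case: (odd k); case: (odd k').
Qed.

Definition Fs (V : finType) (l0 : nat) (i : 'I_(2*l0) -> V) (c : 'I_l0 -> V) (j : 'I_l0) :=
  [set k | (i k == c j) && (i (ordS k) == c (ordS j))].
Definition Bs (V : finType) (l0 : nat) (i : 'I_(2*l0) -> V) (c : 'I_l0 -> V) (j : 'I_l0) :=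
  [set k | (i k == c (ordS j)) && (i (ordS k) == c j)].

Theorem lemma4p7 (V : finType) (l0 : nat) (i : 'I_(2 * l0) -> V) :
  4 <= l0 -> ~~ odd l0 -> one_d_ring i ->
  forall v w : V, adjU i v w -> black i v != black i w.
Proof.
move=> l4 ev [[l3 cardV route [c [cinj cadj]] two] nbal].
have hS1 : forall j : 'I_l0, ordS j != j.
  move=> j; apply/negP => /eqP /(congr1 val) /= /eqP.
  by apply/negP; apply: ordS_neq.
have hS2 : forall j : 'I_l0, ordS (ordS j) != j.
  move=> j; apply/negP => /eqP /(congr1 val) /= /eqP.
  by apply/negP; apply: ordSS_neq.
pose F := Fs _ _ i c. pose B := Bs _ _ i c.
pose S := fun j => conn_edges i (c j) (c (ordS j)).
have hSdec : forall j, S j = F j :|: B j.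
  by move=> j; apply/setP => k; rewrite !inE /etail /ehead.
have hSc : forall j, #|S j| = 2.
  move=> j; apply: two; apply/cadj; exists j; by left.
have hFB : forall j, #|F j| + #|B j| = 2.
  move=> j; have := hSc j; rewrite hSdec cardsU.
  have -> : F j :&: B j = set0.
    apply/setP => k; rewrite !inE; apply/negP => /andP[/andP[/eqP a _] /andP[/eqP b _]].
    by move: (hS1 j); rewrite -(cinj _ _ (etrans (esym a) b)) eqxx.
  by rewrite cards0 subn0.
have hFin : forall j k, (k \in F j) = (i k == c j) && (i (ordS k) == c (ordS j)).
  by move=> j k; rewrite inE.
have hBin : forall j k, (k \in B j) = (i k == c (ordS j)) && (i (ordS k) == c j).
  by move=> j k; rewrite inE.
have hSin : forall j k, (k \in S j) = ((i k == c j) && (i (ordS k) == c (ordS j)))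
   || ((i k == c (ordS j)) && (i (ordS k) == c j)).
  by move=> j k; rewrite hSdec inE hFin hBin.
have hdisj : forall j j' k, k \in S j -> k \in S j' -> j = j'.
  move=> j j' k; rewrite !hSin.
  move=> /orP[/andP[/eqP a /eqP b]|/andP[/eqP a /eqP b]] /orP[/andP[/eqP a' /eqP b']|/andP[/eqP a' /eqP b']].
  - exact: cinj (etrans (esym a) a').
  - have e1 := cinj _ _ (etrans (esym a) a'); have e2 := cinj _ _ (etrans (esym b) b').
    by move: (hS2 j'); rewrite -e1 e2 eqxx.
  - have e1 := cinj _ _ (etrans (esym a) a'); have e2 := cinj _ _ (etrans (esym b) b').
    by move: (hS2 j); rewrite e1 -e2 eqxx.
  - exact: ordS_inj (cinj _ _ (etrans (esym a) a')).
have hstep : forall k, exists j, k \in S j.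
  pose P := [set S j | j : 'I_l0].
  have Sinj : injective S.
    move=> j j' e; have : 0 < #|S j| by rewrite hSc.
    rewrite card_gt0 => /set0Pn [k kin]; apply: (hdisj _ _ k kin); by rewrite -e.
  have tP : trivIset P.
    apply/trivIsetP => A A' /imsetP[j _ ->] /imsetP[j' _ ->] ne.
    rewrite -setI_eq0; apply/eqP/setP => k; rewrite in_setI in_set0; apply/negP => /andP[x y].
    by move: ne; rewrite (hdisj _ _ _ x y) eqxx.
  have hcov : #|cover P| = 2 * l0.
    have [_] := leq_card_cover P; rewrite tP => /eqP ->.
    rewrite big_imset /=; last by move=> x y _ _; apply: Sinj.
    rewrite (eq_bigr (fun _ => 2)); last by move=> j _; apply: hSc.
    by rewrite sum_nat_const card_ord mulnC.
  have Ecov : cover P = setT.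
    by apply/eqP; rewrite eqEcard subsetT cardsT card_ord hcov leqnn.
  move=> k; have : k \in cover P by rewrite Ecov inE.
  by rewrite /cover => /bigcupP [A /imsetP[j _ ->] kin]; exists j.
have hloop : forall k, i k != i (ordS k).
  move=> k; have [j] := hstep k; rewrite hSin.
  move=> /orP[/andP[/eqP a /eqP b]|/andP[/eqP a /eqP b]]; rewrite a b; apply/negP => /eqP /cinj e.
  - by move: (hS1 j); rewrite -e eqxx.
  - by move: (hS1 j); rewrite e eqxx.
have hin : forall j, [set k | i (ordS k) == c (ordS j)] = F j :|: B (ordS j).
  move=> j; apply/setP => k; rewrite in_setU hFin hBin inE.
  apply/idP/idP.
  - move=> /eqP h; have [j'] := hstep k; rewrite hSin.
    move=> /orP[/andP[/eqP a /eqP b]|/andP[/eqP a /eqP b]].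
    + have e := ordS_inj (cinj _ _ (etrans (esym b) h)).
      by rewrite a b e !eqxx.
    + have e := cinj _ _ (etrans (esym b) h).
      by rewrite a b e !eqxx orbT.
  - by case/orP => /andP[_ /eqP ->].
have hout : forall j, [set k | i k == c (ordS j)] = B j :|: F (ordS j).
  move=> j; apply/setP => k; rewrite in_setU hFin hBin inE.
  apply/idP/idP.
  - move=> /eqP h; have [j'] := hstep k; rewrite hSin.
    move=> /orP[/andP[/eqP a /eqP b]|/andP[/eqP a /eqP b]].
    + have e := cinj _ _ (etrans (esym a) h).
      by rewrite a b e !eqxx orbT.
    + have e := ordS_inj (cinj _ _ (etrans (esym a) h)).
      by rewrite a b e !eqxx.
  - by case/orP => /andP[/eqP -> _].
have hd1 : forall j, F j :&: B (ordS j) = set0.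
  move=> j; apply/setP => k; rewrite in_setI hFin hBin in_set0.
  apply/negP => /andP[/andP[/eqP a _] /andP[/eqP b _]].
  by move: (hS2 j); rewrite -(cinj _ _ (etrans (esym a) b)) eqxx.
have hd2 : forall j, B j :&: F (ordS j) = set0.
  move=> j; apply/setP => k; rewrite in_setI hFin hBin in_set0.
  apply/negP => /andP[/andP[_ /eqP a] /andP[_ /eqP b]].
  by move: (hS2 j); rewrite -(cinj _ _ (etrans (esym a) b)) eqxx.
have hio : forall v, #|[set k | i (ordS k) == v]| = #|[set k | i k == v]|.
  move=> v; have := @card_preimset _ (@ordS (2*l0)) [set k | i k == v] (@ordS_inj _).
  move=> <-; apply: eq_card => k; by rewrite !inE.
have hFeq : forall j, #|F (ordS j)| = #|F j|.
  move=> j; have := hio (c (ordS j)); rewrite hin hout !cardsU hd1 hd2 !cards0 !subn0.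
  have := hFB j; have := hFB (ordS j); lia.
have l0p : 0 < l0 by lia.
pose o : 'I_l0 := Ordinal l0p.
have hFn : forall n (hn : n < l0), #|F (Ordinal hn)| = #|F o|.
  elim=> [|n IH] hn; first by congr (#|F _|); apply: val_inj.
  have hn' : n < l0 by lia.
  rewrite -(IH hn') -(hFeq (Ordinal hn')); congr (#|F _|); apply: val_inj => /=; rewrite modn_small //.
have hFall : forall j, #|F j| = #|F o| by move=> [m hm]; exact: hFn.
have hex : forall k, exists j, i k = c j.
  move=> k; have [j] := hstep k; rewrite hSin.
  by move=> /orP[] /andP[/eqP a _]; eexists; exact: a.
have P : forall k k', i k = i k' -> odd k = odd k'.
  case ef : #|F o| => [|[|[|f]]].
  - apply: (walk_parity _ _ i c l0.-1 (@ord_pred l0)) => //.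
    + by move: ev; rewrite -{1}(prednK l0p) /= negbK.
    + by move=> j /=; congr (_ %% _); lia.
    + move=> k j e; have [j'] := hstep k; rewrite hSdec in_setU => /orP[kF|kB].
      * have : #|F j'| = 0 by rewrite hFall ef.
        by move/cards0_eq => h; rewrite h inE in kF.
      * rewrite hBin in kB; case/andP: kB => /eqP a /eqP b.
        have e' := cinj _ _ (etrans (esym a) e).
        by rewrite b -e' ordSK.
  - exfalso; apply: nbal.
    have hB1 : forall j, #|B j| = 1 by move=> j; have := hFB j; rewrite hFall ef; lia.
    pose R k := [set k' | (i k' == i (ordS k)) && (i (ordS k') == i k)].
    pose D k := [set k' | (i k' == i k) && (i (ordS k') == i (ordS k))].
    have hRD : forall k, #|R k| = 1 /\ #|D k| = 1.
      move=> k; have [j] := hstep k; rewrite hSin => /orP[] /andP[/eqP a /eqP b];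
        rewrite /R /D a b.
      + by split; [exact: hB1 j | rewrite -(hFall j) in ef; exact: ef].
      + by split; [rewrite -(hFall j) in ef; exact: ef | exact: hB1 j].
    pose s k := odflt k [pick k' in R k].
    have hsR : forall k, s k \in R k.
      move=> k; rewrite /s; case: pickP => [x hx|none] //=.
      have : 0 < #|R k| by rewrite (hRD k).1.
      rewrite card_gt0 => /set0Pn [x hx]; by have := none x; rewrite hx.
    have hDu : forall k k', k' \in D k -> k' = k.
      move=> k k' h; move/eqP: (hRD k).2 => /cards1P [x ex].
      have kD : k \in D k by rewrite inE !eqxx.
      by move: h kD; rewrite ex !inE => /eqP -> /eqP ->.
    exists s => k.
    have := hsR k; rewrite inE => /andP[/eqP h1a /eqP h1b].
    have := hsR (s k); rewrite inE => /andP[/eqP h2a /eqP h2b].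
    split.
    + by apply: hDu; rewrite inE h2a h2b h1a h1b !eqxx.
    + apply/negP => /eqP e; move: (hloop k); by rewrite -{1}e h1a eqxx.
    + by rewrite /etail /ehead h1a.
    + by rewrite /etail /ehead h1b.
  - apply: (walk_parity _ _ i c 1 (@ordS l0)) => //.
    + by move=> j /=; rewrite addn1.
    + move=> k j e; have [j'] := hstep k; rewrite hSdec in_setU => /orP[kF|kB].
      * rewrite hFin in kF; case/andP: kF => /eqP a /eqP b.
        have e' := cinj _ _ (etrans (esym a) e).
        by rewrite b e'.
      * have : #|B j'| = 0 by have := hFB j'; rewrite hFall ef; lia.
        by move/cards0_eq => h; rewrite h inE in kB.
  - by have := hFB o; rewrite ef; lia.
have hbl : forall k, black i (i k) = ~~ odd k.
  move=> k; rewrite /black; apply/existsP/idP => [[k' /andP[h /eqP e]] | h].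
    by rewrite -(P _ _ e).
  by exists k; rewrite h eqxx.
have hodd : forall k : 'I_(2*l0), odd (ordS k) = ~~ odd k.
  move=> k; rewrite /= (modS_small _ _ (ltn_ord k)); case: ifP => /eqP e //.
  have := congr1 odd e; rewrite /= oddM /= => ->; by [].
move=> v w /andP[_]; rewrite card_gt0 => /set0Pn [k]; rewrite inE /etail /ehead => hk.
by case/orP: hk => /andP[/eqP <- /eqP <-]; rewrite !hbl hodd; case: (odd k).
Qed.
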